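(* For all $[a,b],[c,d]\in\mathcal W$ (all equations below in $\mathbb Z_r$, $\mathbb 1$ the indicator function): (i) $[W_{[a,b]}\otimes W_{[c,d]}:U_{a'}]=\mathbb 1_{a+c=a',\,b+d=a'}+\mathbb 1_{a+d=a',\,b+c=a'}$; (ii) $[W_{[a,b]}\otimes W_{[c,d]}:V_{b'}]=\mathbb 1_{a+b+c+d=2b'}+\mathbb 1_{a+c=b',\,b+d=b'}+\mathbb 1_{a+d=b',\,b+c=b'}$; (iii) $[W_{[a,b]}\otimes W_{[c,d]}:W_{[c',d']}]=\mathbb 1_{a+b+c+d=c'+d'}+\mathbb 1_{a+c=c',\,b+d=d'}+\mathbb 1_{a+c=d',\,b+d=c'}+\mathbb 1_{a+d=c',\,b+c=d'}+\mathbb 1_{a+d=d',\,b+c=c'}$; (iv) $[W_{[a,b]}\otimes W_{[c,d]}:X_{[n']}]=\mathbb 1_{a+b+c+d=\overline{n'}}$.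
   Context: Let $q=p^\ell$ be a prime power, $G=\mathrm{GL}_2(q)=\mathrm{GL}_2(\mathbb{F}_q)$, $r=q-1$, $s=q+1$, $\mathbb{Z}_n=\mathbb{Z}/n\mathbb{Z}$. Fix a generator $\rho$ of $\mathbb{F}_q^\times$ and a generator $\sigma$ of $\mathbb{F}_{q^2}^\times$ with $\sigma^s=\rho$. For $a\in\mathbb{Z}_r$ let $\alpha_a:\mathbb{F}_q^\times\to\mathbb{C}^\times$, $\alpha_a(\rho^j)=e^{2\pi i aj/r}$; for $n\in\mathbb{Z}_{rs}$ let $\phi_n:\mathbb{F}_{q^2}^\times\to\mathbb{C}^\times$, $\phi_n(\sigma^j)=e^{2\pi i nj/(rs)}$; $\bar n\in\mathbb{Z}_r$ denotes the reduction of $n$ modulo $r$. Let $\mathcal W$ be the set of unordered pairs $[a,b]=\{a,b\}$ with $a\ne b$ in $\mathbb{Z}_r$, and $\mathcal X$ the set of classes $[n]$ of elements $n\in\mathbb{Z}_{rs}$ with $n\not\equiv0\pmod s$ under the equivalence $n\sim qn$. The conjugacy classes of $G$ are: $c_1(k)$ ($k\in\mathbb Z_r$) containing $\rho^kI$; $c_2(k)$ ($k\in\mathbb Z_r$) containing $\begin{pmatrix}\rho^k&0\\1&\rho^k\end{pmatrix}$; $c_3([k,\ell])$ ($[k,\ell]\in\mathcal W$) containing $\mathrm{diag}(\rho^k,\rho^\ell)$; $c_4([m])$ ($[m]\in\mathcal X$) consisting of the matrices with eigenvalues $\sigma^m,\sigma^{qm}$ in $\mathbb{F}_{q^2}$.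 Up to isomorphism the irreducible complex representations of $G$ are exactly the following (pairwise non-isomorphic for distinct parameters), given by their character values on $(c_1(k),c_2(k),c_3([k,\ell]),c_4([m]))$: $U_a$, $a\in\mathbb Z_r$, dimension $1$: $(\alpha_a(\rho^{2k}),\alpha_a(\rho^{2k}),\alpha_a(\rho^{k+\ell}),\alpha_a(\rho^{m}))$ (i.e. $U_a=\alpha_a\circ\det$); $V_a$, $a\in\mathbb Z_r$, dimension $q$: $(q\alpha_a(\rho^{2k}),0,\alpha_a(\rho^{k+\ell}),-\alpha_a(\rho^m))$; $W_{[a,b]}$, $[a,b]\in\mathcal W$, dimension $s$: $(s\alpha_{a+b}(\rho^k),\alpha_{a+b}(\rho^k),\alpha_a(\rho^k)\alpha_b(\rho^\ell)+\alpha_a(\rho^\ell)\alpha_b(\rho^k),0)$; $X_{[n]}$, $[n]\in\mathcal X$, dimension $r$: $(r\alpha_{\bar n}(\rho^k),-\alpha_{\bar n}(\rho^k),0,-(\phi_n(\sigma^m)+\phi_n(\sigma^{qm})))$. Tensor products $\pi_1\otimes\pi_2$ of $G$-representations carry the diagonal $G$-action, and for $\pi_3$ irreducible, $[\pi_1\otimes\pi_2:\pi_3]=\dim\mathrm{Hom}_G(\pi_1\otimes\pi_2,\pi_3)$. *)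

(* Defs.v *)
From HB Require Import structures.
From mathcomp Require Import all_boot all_order all_algebra all_fingroup all_field all_character.
Set Implicit Arguments. Unset Strict Implicit. Unset Printing Implicit Defensive.
Import GRing.Theory Num.Theory.
Local Open Scope ring_scope.

(* zeta n = e^{2 pi i / n} in algC: n.-root (-1) is the n-th root of -1 of
   minimal nonnegative argument, i.e. e^{i pi / n}. *)
Definition zeta (n : nat) : algC := (n.-root (-1)) ^+ 2.

Definition ind (b : bool) : algC := if b then 1 else 0.

Section GL2.
Variables (F L : finFieldType) (iota : {rmorphism F -> L}) (rho : F) (sigma : L).

Definition qq : nat := #|F|.
Definition rr : nat := (#|F|.-1)%N.
Definition ss : nat := (#|F|.+1)%N.

Definition logF (x : F) : nat :=
  if [pick k : 'I_rr | rho ^+ k == x] is Some k then val k else 0%N.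

(* conjugacy-class parameter of an element of GL_2(q):
   C1 k : rho^k I ; C2 k : non-scalar with double eigenvalue rho^k ;
   C3 k l : eigenvalues rho^k <> rho^l in F ; C4 m : eigenvalues sigma^m,
   sigma^(qm) in L = F_{q^2} not in F. *)
Inductive gl2class := C1 of nat | C2 of nat | C3 of nat & nat | C4 of nat.

Definition classify (g : 'M[F]_2) : gl2class :=
  let t := \tr g in let d := \det g in
  if g == (g ord0 ord0)%:M then C1 (logF (g ord0 ord0)) else
  match [pick x : F | x ^+ 2 - t * x + d == 0] with
  | Some x => if x == t - x then C2 (logF x) else C3 (logF x) (logF (t - x))
  | None =>
      C4 (if [pick m : 'I_(rr * ss) |
                (sigma ^+ m) ^+ 2 - iota t * sigma ^+ m + iota d == 0]
          is Some m then val m else 0%N)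
  end.

(* alpha_a(rho^j) and phi_n(sigma^j) *)
Definition alpha (a j : nat) : algC := zeta rr ^+ (a * j).
Definition phi (n j : nat) : algC := zeta (rr * ss) ^+ (n * j).

Definition chiU (a : nat) (g : 'M[F]_2) : algC :=
  match classify g with
  | C1 k => alpha a (2 * k) | C2 k => alpha a (2 * k)
  | C3 k l => alpha a (k + l) | C4 m => alpha a m end.

Definition chiV (a : nat) (g : 'M[F]_2) : algC :=
  match classify g with
  | C1 k => qq%:R * alpha a (2 * k) | C2 k => 0
  | C3 k l => alpha a (k + l) | C4 m => - alpha a m end.

Definition chiW (a b : nat) (g : 'M[F]_2) : algC :=
  match classify g with
  | C1 k => ss%:R * alpha (a + b) k | C2 k => alpha (a + b) k
  | C3 k l => alpha a k * alpha b l + alpha a l * alpha b k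
  | C4 m => 0 end.

Definition chiX (n : nat) (g : 'M[F]_2) : algC :=
  match classify g with
  | C1 k => rr%:R * alpha (n %% rr) k | C2 k => - alpha (n %% rr) k
  | C3 k l => 0
  | C4 m => - (phi n m + phi n (qq * m)) end.

End GL2.

(* multiplicity [pi1 (x) pi2 : pi3] computed as the character inner product
   <chi1 chi2, chi3>_G on G = GL_2(F) *)
Definition mult (F : finFieldType) (chi1 chi2 chi3 : 'M[F]_2 -> algC) : algC :=
  (#|[set: {'GL_2[F]}]|%:R)^-1 *
  \sum_(g : {'GL_2[F]}) chi1 (GLval g) * chi2 (GLval g) * (chi3 (GLval g))^*.

(* Main.v *)
Require Import Defs.
From HB Require Import structures.
From mathcomp Require Import all_boot all_order all_algebra all_fingroup all_field all_character.
From mathcomp Require Import ring lra zify.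
Set Implicit Arguments. Unset Strict Implicit. Unset Printing Implicit Defensive.
Import GRing.Theory Num.Theory Order.TTheory.
Local Open Scope ring_scope.


Lemma real_key (R : realFieldType) (p q c s : R) : c^+2 + s^+2 = 1 -> p^+2 + q^+2 = 1 -> 0 <= s -> c != 1 ->
 p*(c^+2 - s^+2) - q*(2*c*s) <= p -> p*(c^+2-s^+2) + q*(2*c*s) <= p -> c <= p.
Proof.
move=> h1 h2 hs hc H1 H2.
have [s0|spos] := eqVneq s 0.
  have : c = -1.
    subst s. have : (c - 1) * (c + 1) = 0.
      have -> : (c - 1) * (c + 1) = c^+2 - 1 by ring.
      by rewrite -h1; ring.
    move/eqP; rewrite mulf_eq0 subr_eq0 (negbTE hc) /= addr_eq0 => /eqP //.
  move=> ->; nra.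
have sp : 0 < s by rewrite lt_def spos hs.
have e1 : p*(c^+2 - s^+2) - p = - (2 * s) * (p * s) + (c^+2 + s^+2 - 1) * p by ring.
rewrite h1 subrr mul0r addr0 in e1.
have K1 : 0 <= q * c + p * s.
  have : - (2 * s) * (p * s) <= (2*s) * (q * c) by rewrite -e1; lra.
  nra.
have K2 : 0 <= - (q * c) + p * s.
  have : - (2 * s) * (p * s) <= - (2*s) * (q * c) by rewrite -e1; lra.
  nra.
have p0 : 0 <= p * s by lra.
have p0' : 0 <= p by nra.
have [c0|c0] := lerP c 0; first by lra.
rewrite leNgt; apply/negP => pc.
have pc2 : p^+2 < c^+2 by nra.
have qs2 : s^+2 < q^+2 by lra.
have k3 : (q * c)^+2 <= (p * s)^+2 by nra.
nra.
Qed.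

Lemma leRval (x y : algR) : (x <= y) = (algRval x <= algRval y). Proof. by []. Qed.
Lemma real_keyC (p q c s : algC) : p \is Creal -> q \is Creal -> c \is Creal -> s \is Creal ->
 c^+2 + s^+2 = 1 -> p^+2 + q^+2 = 1 -> 0 <= s -> c != 1 ->
 p*(c^+2 - s^+2) - q*(2*c*s) <= p -> p*(c^+2-s^+2) + q*(2*c*s) <= p -> c <= p.
Proof.
move=> pR qR cR sR h1 h2 hs hc H1 H2.
pose P := in_algR pR; pose Q := in_algR qR; pose C := in_algR cR; pose S := in_algR sR.
have -> : c = algRval C by []. have -> : p = algRval P by [].
have : C <= P.
  apply: (@real_key algR P Q C S).
  - by apply: val_inj => /=; rewrite -h1 !expr2.
  - by apply: val_inj => /=; rewrite -h2 !expr2.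
  - by [].
  - apply/eqP => /(congr1 val) /= => /eqP; exact/negP.
  - by rewrite leRval /=; rewrite !expr2 in H1.
  - by rewrite leRval /=; rewrite !expr2 in H2.
by [].
Qed.

Lemma zeta_prim n : (1 < n)%N -> n.-primitive_root (zeta n).
Proof.
move=> n1; have n0 : (0 < n)%N := ltnW n1.
rewrite /zeta; set w := n.-root (-1).
have wn : w ^+ n = -1 by rewrite /w rootCK.
have n20 : (0 < 2 * n)%N by rewrite muln_gt0.
have [xi pxi] := C_prim_root_exists n20.
have xin : xi ^+ n = -1.
  have : (xi ^+ n) ^+ 2 == 1 by rewrite -exprM mulnC (prim_expr_order pxi).
  rewrite sqrf_eq1 => /orP [] /eqP // h.
  have : (2 * n %| n)%N by rewrite (prim_order_dvd pxi) h.
  move/(dvdn_leq n0) => ?; lia.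
have normR (z : algC) : z ^+ n = -1 -> `|z| = 1.
  by move=> hz; apply/eqP; rewrite -(pexpr_eq1 n0) ?normr_ge0 // -normrX hz normrN1.
have wN : w ^+ (2 * n) = 1 by rewrite mulnC exprM wn sqrrN expr1n.
have wmod m : w ^+ (2 * m) = w ^+ (2*(m %% n)).
  rewrite {1}(divn_eq m n) mulnDr exprD.
  have -> : (2 * (m %/ n * n) = (2 * n) * (m %/ n))%N by ring.
  by rewrite exprM wN expr1n mul1r.
pose f (j : 'I_n) : algR := in_algR (Creal_Re (xi * w ^+ (2 * j))).
pose k := Order.arg_max (Ordinal n0) xpredT f.
have kmax : forall j, f j <= f k.
  rewrite /k; case: arg_maxP => // i _ H j; exact: H.
set u := xi * w ^+ (2 * k).
have ReU m : 'Re (xi * w ^+ (2 * m)) <= 'Re u.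
  rewrite wmod; exact: (kmax (Ordinal (ltn_pmod m n0))).
have un : u ^+ n = -1.
  by rewrite /u exprMn xin -exprM mulnAC exprM wN expr1n mulr1.
have Re_le : 'Re u <= 'Re w.
  have [h|h] := boolP (0 <= 'Im u); first exact: rootC_Re_max n0 un h.
  rewrite -Re_conj; apply: (rootC_Re_max n0); first by rewrite -rmorphXn un rmorphN rmorph1.
  rewrite Im_conj oppr_ge0; apply: ltW.
  by rewrite real_ltNge ?rpred0 ?Creal_Im.
have w0 : w != 0 by apply/eqP => w0; move: wn; rewrite w0 expr0n gtn_eqF //= => /eqP; rewrite eq_sym oppr_eq0 oner_eq0.
have wc : w^* = w ^+ (2 * n).-1.
  by apply: (mulIf w0); rewrite -exprSr prednK // wN mulrC -normCK normR // expr1n.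
have uw2 : 'Re (u * w^+2) <= 'Re u.
  by rewrite /u -mulrA -exprD -mulnSr; apply: ReU.
have uwc2 : 'Re (u * (w^*)^+2) <= 'Re u.
  rewrite wc /u -mulrA.
  have -> : w ^+ (2 * k) * (w ^+ (2 * n).-1) ^+ 2 = w ^+ (2 * (k + (2 * n).-1)).
    by rewrite -exprM -exprD mulnDr (mulnC _ 2).
  exact: ReU.
set p := 'Re u in Re_le uw2 uwc2; set q := 'Im u.
set c := 'Re w in Re_le; set s := 'Im w.
have Rew2 : 'Re (w ^+ 2) = c ^+ 2 - s ^+ 2 by rewrite expr2 ReM -!expr2.
have Imw2 : 'Im (w ^+ 2) = 2 * c * s by rewrite expr2 ImM -/c -/s; ring.
rewrite ReM -/p -/q Rew2 Imw2 in uw2.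
rewrite ReM -/p -/q -rmorphXn Re_conj Im_conj Rew2 Imw2 mulrN opprK in uwc2.
have cs1 : c ^+ 2 + s ^+ 2 = 1 by rewrite -normC2_Re_Im normR // expr1n.
have pq1 : p ^+ 2 + q ^+ 2 = 1 by rewrite -normC2_Re_Im normR // expr1n.
have s0 : 0 <= s by apply: Im_rootC_ge0.
have c1 : c != 1.
  apply/eqP => c1; move: cs1; rewrite c1 expr1n -{2}(addr0 1) => /addrI /eqP.
  rewrite sqrf_eq0 => /eqP s0'.
  have w1 : w = 1 by rewrite [w]Crect -/c -/s c1 s0' mulr0 addr0.
  move: wn; rewrite w1 expr1n => /eqP; rewrite -addr_eq0 -mulr2n pnatr_eq0 //.
have cp : c <= p by exact: (@real_keyC p q c s (Creal_Re u) (Creal_Im u) (Creal_Re w) (Creal_Im w)).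
have pc : p = c by apply/eqP; rewrite eq_le Re_le cp.
have qs : (q - s) * (q + s) = 0.
  have : q ^+ 2 = s ^+ 2 by apply/(addrI (c ^+ 2)); rewrite cs1 -pc pq1.
  by rewrite -subr_sqr => ->; rewrite subrr.
have wE : w = c + 'i * s by rewrite [w]Crect.
have uE : u = c + 'i * q by rewrite [u]Crect -pc.
have uw : exists j, u = w ^+ j.
  move/eqP: qs; rewrite mulf_eq0 subr_eq0 addr_eq0 => /orP [] /eqP qE.
    by exists 1%N; rewrite expr1 uE qE wE.
  exists (2 * n).-1; rewrite -wc uE qE wE conjC_rect ?Creal_Re ?Creal_Im //.
  by rewrite mulrN.
have [j xij] : exists j, xi = w ^+ j.
  case: uw => j0 uj0; exists (j0 + 2 * (k * n.-1))%N.
  rewrite exprD -uj0 /u -mulrA -exprD.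
  have -> : (2 * k + 2 * (k * n.-1) = (2 * n) * k)%N.
    by rewrite -mulnDr -mulnS prednK //; ring.
  by rewrite exprM wN expr1n mulr1.
have [m pm mdvd] := prim_order_exists n20 wN.
have dm : (2 * n %| m)%N.
  by rewrite (prim_order_dvd pxi) xij -exprM mulnC exprM (prim_expr_order pm) expr1n.
have m2n : m = (2 * n)%N by apply/eqP; rewrite eqn_dvd mdvd dm.
rewrite m2n in pm.
have := exp_prim_root pm 2%N.
by rewrite gcdnMr mulKn.
Qed.
Section Count.
Variable F : finFieldType.
Local Notation q := #|F|.

Definition mk4 (p : F * F * F * F) : 'M[F]_2 :=
  \matrix_(i < 2, j < 2) if i == 0 then (if j == 0 then p.1.1.1 else p.1.1.2)
                         else (if j == 0 then p.1.2 else p.2).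
Definition un4 (M : 'M[F]_2) : F * F * F * F := (M 0 0, M 0 1, M 1 0, M 1 1).

Lemma mk4K : cancel mk4 un4.
Proof. by case=> [[[a b] c] d]; rewrite /un4 /mk4 !mxE. Qed.
Lemma un4K : cancel un4 mk4.
Proof.
move=> M; apply/matrixP => i j; rewrite /mk4 /un4 mxE /=.
case: i => [[|[|i]] Hi]; case: j => [[|[|j]] Hj] //=; try by congr (M _ _); apply: val_inj.
Qed.

Lemma tr2 (M : 'M[F]_2) : \tr M = M 0 0 + M 1 1.
Proof. by rewrite /mxtrace !big_ord_recl big_ord0 addr0 /=; congr (_ + M _ _); apply: val_inj. Qed.

Lemma det2 (M : 'M[F]_2) : \det M = M 0 0 * M 1 1 - M 0 1 * M 1 0.
Proof.
rewrite (expand_det_row _ 0) !big_ord_recl big_ord0 addr0 /cofactor !det_mx11 !mxE /=.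
rewrite !expr0 !mul1r expr1 mulN1r mulrN.
by congr (M _ _ * M _ _ - M _ _ * M _ _); apply: val_inj.
Qed.

Lemma sum_mat (G : 'M[F]_2 -> nat) : (\sum_(M : 'M[F]_2) G M =
  \sum_(a : F) \sum_(b : F) \sum_(c : F) \sum_(d : F) G (mk4 (a,b,c,d)))%N.
Proof.
rewrite (reindex mk4) /=; last by exists un4 => x _; [apply: mk4K | apply: un4K].
rewrite -(pair_big xpredT xpredT (fun p d => G (mk4 (p, d)))) /=.
rewrite -(pair_big xpredT xpredT (fun p c => \sum_d G (mk4 (p, c, d)))) /=.
by rewrite -(pair_big xpredT xpredT (fun a b => \sum_c \sum_d G (mk4 (a, b, c, d)))) /=.
Qed.

Lemma sum_eq1 (T : finType) (t : T) (P : pred T) :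
  (\sum_(x : T) ((x == t) && P x) = P t)%N.
Proof.
rewrite (bigD1 t) //= eqxx big1 ?addn0 // => x /negbTE ->; by [].
Qed.

Lemma prod_count (v : F) :
  (\sum_(b : F) \sum_(c : F) (b * c == v)%R = if v == 0%R then 2 * q - 1 else q - 1)%N.
Proof.
rewrite (bigD1 0) //= (eq_bigr (fun _ => (v == 0%R : nat))); last by move=> c _; rewrite mul0r eq_sym.
rewrite sum_nat_const.
rewrite (eq_bigr (fun _ => 1%N)); last first.
  move=> b b0; rewrite (eq_bigr (fun c => nat_of_bool ((c == b^-1 * v) && true))) ?sum_eq1 //.
  move=> c _; rewrite andbT; congr (nat_of_bool _); apply/eqP/eqP => [<-|->].
    by rewrite mulKf.
  by rewrite mulVKf.
rewrite sum1_card cardC1.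
have q0 : (0 < #|F|)%N by apply/card_gt0P; exists 0.
change #|xpredT| with #|F|; case: (v == 0) => /=; lia.
Qed.

Lemma mk4E a b c d : \tr (mk4 (a,b,c,d)) = a + d /\ \det (mk4 (a,b,c,d)) = a * d - b * c.
Proof. by rewrite tr2 det2 /mk4 !mxE. Qed.

Lemma cp_count (x y : F) :
  (\sum_(M : 'M[F]_2) ((x + y == \tr M) && (x * y == \det M))%R
     = if x == y then q * q else q * q + q)%N.
Proof.
have q0 : (0 < #|F|)%N by apply/card_gt0P; exists 0.
rewrite sum_mat.
have E a : (\sum_(b : F) \sum_(c : F) \sum_(d : F)
    ((x + y == \tr (mk4 (a,b,c,d))) && (x * y == \det (mk4 (a,b,c,d))))%R
    = (q - 1) + q * ((a == x) || (a == y)))%N.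
  transitivity (\sum_(b : F) \sum_(c : F) (b * c == a * (x + y - a) - x * y)%R)%N.
    apply: eq_bigr => b _; apply: eq_bigr => c _.
    rewrite (eq_bigr (fun d => nat_of_bool ((d == x + y - a) && (b * c == a * (x + y - a) - x * y)))).
      by rewrite sum_eq1.
    move=> d _; case: (mk4E a b c d) => -> ->; congr (nat_of_bool _).
    have [->|ne] := eqVneq d (x + y - a).
      have -> : a + (x + y - a) = x + y by ring.
      rewrite !eqxx /=; apply/eqP/eqP => h; rewrite h; ring.
    apply/negbTE; apply: contra ne => /andP [/eqP h _]; apply/eqP; rewrite h; ring.
  rewrite prod_count.
  have -> : (a * (x + y - a) - x * y == 0) = (a == x) || (a == y).
    have -> : a * (x + y - a) - x * y = - ((a - x) * (a - y)) by ring.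
    by rewrite oppr_eq0 mulf_eq0 !subr_eq0.
  by case: (_ || _) => /=; lia.
rewrite (eq_bigr _ (fun a _ => E a)) big_split /= sum_nat_const -big_distrr /=.
rewrite (bigD1 x) //= eqxx /=.
rewrite (eq_bigr (fun a => nat_of_bool (a == y))); last by move=> a /negbTE ->.
have -> : (\sum_(a | a != x) nat_of_bool (a == y) = (y != x))%N.
  have [->|yx] := eqVneq y x.
    by rewrite big1 // => a /negbTE ->.
  rewrite (bigD1 y) //= eqxx big1 ?addn0 // => a /andP [_ /negbTE ->] //.
change #|xpredT| with #|F|.
rewrite [x == y]eq_sym; case: (y == x) => /=; nia.
Qed.
End Count.

Section Cl.
Variables (F L : finFieldType) (iota : {rmorphism F -> L}) (rho : F) (sigma : L).

Definition KK (h : gl2class -> algC) (M : 'M[F]_2) (x y : F) : algC :=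
  if x == y then 2 * (if M == x%:M then h (C1 (logF rho x)) else h (C2 (logF rho x)))
  else h (C3 (logF rho x) (logF rho y)).

Lemma sum_roots (G : F -> algC) (u v : F) :
  \sum_(x : F) ((x == u) || (x == v))%:R * G x = G u + (u != v)%:R * G v.
Proof.
rewrite (bigD1 u) //= eqxx /= mul1r; congr (_ + _).
have [->|uv] := eqVneq u v.
  by rewrite mul0r big1 // => x /negbTE ->; rewrite mul0r.
rewrite (bigD1 v) 1?eq_sym //= eqxx orbT mul1r big1 ?addr0 //.
by move=> x /andP [/negbTE -> /negbTE ->]; rewrite mul0r.
Qed.

Lemma sum_y (t d x : F) (G : F -> algC) :
  \sum_(y : F) ((x + y == t) && (x * y == d))%:R * G y
    = (x ^+ 2 - t * x + d == 0)%:R * G (t - x).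
Proof.
rewrite (bigD1 (t - x)) //= big1 ?addr0.
  have -> : x + (t - x) = t by ring.
  have -> : (x * (t - x) == d) = (x ^+ 2 - t * x + d == 0).
    by rewrite -subr_eq0 -oppr_eq0; congr (_ == 0); ring.
  by rewrite eqxx.
move=> y yt; have -> : (x + y == t) = false.
  by apply/negbTE; apply: contra yt => /eqP <-; apply/eqP; ring.
by rewrite mul0r.
Qed.

Lemma classify_sum (h : gl2class -> algC) (h4 : forall m, h (C4 m) = 0)
  (h3 : forall k l, h (C3 k l) = h (C3 l k)) (M : 'M[F]_2) :
  2 * h (classify iota rho sigma M) =
  \sum_(x : F) \sum_(y : F) ((x + y == \tr M) && (x * y == \det M))%:R * KK h M x y.
Proof.
rewrite (eq_bigr (fun x => (x ^+ 2 - \tr M * x + \det M == 0)%:R * KK h M x (\tr M - x))); last first.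
  by move=> x _; rewrite sum_y.
rewrite /classify /=.
case: ifP => [sc|nsc].
  set a := M ord0 ord0 in sc *.
  have trM : \tr M = a + a by rewrite (eqP sc) mxtrace_scalar mulr2n.
  have detM : \det M = a * a by rewrite (eqP sc) det_scalar expr2.
  rewrite trM detM.
  rewrite (eq_bigr (fun x => ((x == a) || (x == a))%:R * KK h M x (a + a - x))); last first.
    move=> x _; congr (_%:R * _); rewrite orbb.
    have -> : x ^+ 2 - (a + a) * x + a * a = (x - a) ^+ 2 by ring.
    by rewrite sqrf_eq0 subr_eq0.
  rewrite sum_roots eqxx mul0r addr0 /KK.
  have -> : a + a - a = a by ring.
  by rewrite eqxx sc.
set t := \tr M; set d := \det M.
case: pickP => [x0 /eqP hx0 | none]; last first.
  by rewrite h4 mulr0 big1 // => x _; rewrite none mul0r.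
have roots x : (x ^+ 2 - t * x + d == 0) = (x == x0) || (x == t - x0).
  have -> : x ^+ 2 - t * x + d = (x - x0) * (x - (t - x0)) + (x0 ^+ 2 - t * x0 + d) by ring.
  by rewrite hx0 addr0 mulf_eq0 !subr_eq0.
rewrite (eq_bigr (fun x => ((x == x0) || (x == t - x0))%:R * KK h M x (t - x))); last first.
  by move=> x _; rewrite roots.
rewrite sum_roots /KK.
have ntM z : (M == z%:M) = false.
  apply/negbTE; apply: contraFN nsc => /eqP ->; by rewrite mxE eqxx mulr1n.
have -> : t - (t - x0) = x0 by ring.
case: ifP => [e|ne].
  by rewrite -(eqP e) eqxx ntM mul0r addr0.
rewrite eq_sym ne mul1r /= h3; ring.
Qed.

Lemma sum_GL (f : 'M[F]_2 -> algC) :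
  \sum_(g : {'GL_2[F]}) f (GLval g) = \sum_(M : 'M[F]_2 | M \in unitmx) f M.
Proof.
symmetry; rewrite (reindex_omap (GLval : {'GL_2[F]} -> 'M[F]_2) insub); last first.
  by move=> M uM; rewrite insubT.
apply: eq_bigl => g; rewrite (GL_unitmx g) /= valK eqxx //.
Qed.

Local Notation q := #|F|.

Lemma cp_countC (x y : F) :
  \sum_(M : 'M[F]_2) ((x + y == \tr M) && (x * y == \det M))%:R
     = (if x == y then q * q else q * q + q)%:R :> algC.
Proof. by rewrite -cp_count natr_sum. Qed.

Lemma gl_sum (h : gl2class -> algC) (h4 : forall m, h (C4 m) = 0)
  (h3 : forall k l, h (C3 k l) = h (C3 l k)) :
  2 * \sum_(g : {'GL_2[F]}) h (classify iota rho sigma (GLval g)) =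
  \sum_(x : F) \sum_(y : F) (x * y != 0)%:R *
     (if x == y then 2 * (h (C1 (logF rho x)) + (q * q - 1)%:R * h (C2 (logF rho x)))
      else (q * q + q)%:R * h (C3 (logF rho x) (logF rho y))).
Proof.
rewrite mulr_sumr (sum_GL (fun M => 2 * h (classify iota rho sigma M))).
rewrite (eq_bigr _ (fun M _ => classify_sum h4 h3 M)).
rewrite exchange_big /=; apply: eq_bigr => x _.
rewrite exchange_big /=; apply: eq_bigr => y _.
have [xy0|xy0] := eqVneq (x * y) 0.
  rewrite mul0r big1 // => M uM.
  suff -> : (x * y == \det M) = false by rewrite andbF mul0r.
  apply/negbTE; rewrite xy0 eq_sym; move: uM; by rewrite unitmxE unitfE.
rewrite mul1r.
rewrite big_mkcond /=.
rewrite (eq_bigr (fun M => ((x + y == \tr M) && (x * y == \det M))%:R * KK h M x y)); last first.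
  move=> M _; case: ifP => // uM.
  suff -> : (x * y == \det M) = false by rewrite andbF mul0r.
  apply/negbTE; apply: contra xy0 => /eqP ->; move: uM; rewrite unitmxE unitfE.
  by move/negbFE.
rewrite /KK; case: eqVneq => [<-|xy].
  have cnt := cp_countC x x; rewrite eqxx in cnt.
  rewrite (eq_bigr (fun M => ((x + x == \tr M) && (x * x == \det M))%:R * (2 * h (C2 (logF rho x)))
     + ((M == x%:M)%:R * (2 * (h (C1 (logF rho x)) - h (C2 (logF rho x))))))); last first.
    move=> M _; case: (eqVneq M x%:M) => [->|nM].
      by rewrite mxtrace_scalar det_scalar mulr2n expr2 !eqxx /=; ring.
    by rewrite mul0r addr0.
  rewrite big_split /= -mulr_suml cnt (bigD1 x%:M) //= eqxx big1 ?addr0.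
    rewrite mul1r natrB; last by rewrite muln_gt0; apply/andP; split; apply/card_gt0P; exists 0.
    ring.
  by move=> M /negbTE ->; rewrite mul0r.
rewrite -mulr_suml cp_countC (negbTE xy) mulrC.
done.
Qed.
End Cl.

Section Reidx.
Variables (F : finFieldType) (rho : F).
Hypothesis hrho : (#|F|.-1).-primitive_root rho.
Local Notation r := (#|F|.-1).

Lemma rho_inj : injective (fun k : 'I_r => rho ^+ k).
Proof.
move=> k l /eqP; rewrite (eq_prim_root_expr hrho) !modn_small // => /eqP; exact: val_inj.
Qed.

Lemma sum_nz (phi : F -> algC) :
  \sum_(x : F | x != 0) phi x = \sum_(k < r) phi (rho ^+ k).
Proof.
rewrite -(big_imset _ (in2W rho_inj)) /=.
have r0 : (0 < r)%N := prim_order_gt0 hrho.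
have rho0 : rho != 0 by rewrite (prim_root_eq0 hrho) -lt0n.
have -> : [set rho ^+ (val k) | k : 'I_r] = [set~ 0].
  apply/eqP; rewrite eqEcard cardsC1 card_imset ?card_ord //; last exact: rho_inj.
  rewrite ?andbT ?leqnn ?andbT; apply/subsetP => x /imsetP [k _ ->]; rewrite !inE expf_neq0 //.
by apply: eq_bigl => x; rewrite !inE.
Qed.

Lemma logF_rho (k : 'I_r) : logF rho (rho ^+ k) = k.
Proof.
rewrite /logF; case: pickP => [k' /eqP /rho_inj -> // | /(_ k)]; by rewrite eqxx.
Qed.

Lemma sum_nz2 (G : F -> F -> algC) :
  \sum_(x : F) \sum_(y : F) (x * y != 0)%:R * G x y =
  \sum_(k < r) \sum_(l < r) G (rho ^+ k) (rho ^+ l).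
Proof.
rewrite (bigID (fun x => x != 0)) /= [X in _ + X]big1 ?addr0; last first.
  by move=> x /negbNE /eqP ->; rewrite big1 // => y _; rewrite mul0r eqxx mul0r.
rewrite sum_nz; apply: eq_bigr => k _.
rewrite (bigID (fun y => y != 0)) /= [X in _ + X]big1 ?addr0; last first.
  by move=> y /negbNE /eqP ->; rewrite mulr0 eqxx mul0r.
rewrite sum_nz; apply: eq_bigr => l _.
have rho0 : rho != 0 by rewrite (prim_root_eq0 hrho) -lt0n (prim_order_gt0 hrho).
by rewrite mulf_neq0 ?expf_neq0 // mul1r.
Qed.
End Reidx.

Section Zeta.
Variable r : nat.
Hypothesis r1 : (1 < r)%N.
Local Notation z := (zeta r).

Lemma zprim : r.-primitive_root z. Proof. exact: zeta_prim. Qed.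

Definition E (u : nat) : algC := \sum_(k < r) z ^+ (u * k).

Lemma E_val u : E u = r%:R * ind (u %% r == 0)%N.
Proof.
have r0 : (0 < r)%N by apply: ltnW.
rewrite /E /ind; case: ifP => d.
  have zu : z ^+ u = 1 by apply/eqP; rewrite -(prim_order_dvd zprim).
  rewrite (eq_bigr (fun _ => 1)); last by move=> k _; rewrite exprM zu expr1n.
  by rewrite sumr_const card_ord mulr1.
have zu : z ^+ u != 1 by rewrite -(prim_order_dvd zprim); apply/negbT.
rewrite mulr0.
have : (z ^+ u) ^+ r - 1 = 0 by rewrite -exprM mulnC exprM (prim_expr_order zprim) expr1n subrr.
rewrite subrX1 => /eqP; rewrite mulf_eq0 subr_eq0 (negbTE zu) /= => /eqP h.
by rewrite (eq_bigr (fun k : 'I_r => (z ^+ u) ^+ k)) ?h // => k _; rewrite exprM.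
Qed.

Lemma z_conj m : (z ^+ m)^* = z ^+ (m * r.-1).
Proof.
have r0 : (0 < r)%N by apply: ltnW.
have z0 : z != 0 by rewrite (prim_root_eq0 zprim) -lt0n.
have zr := prim_expr_order zprim.
have nz : `|z| = 1.
  by apply/eqP; rewrite -(pexpr_eq1 r0) ?normr_ge0 // -normrX zr normr1.
have zc : z^* = z ^+ r.-1.
  apply: (mulrI (x := z)); first by rewrite unitfE.
  by rewrite -normCK nz expr1n -exprS prednK.
have -> : (z ^+ m)^* = (z^*) ^+ m by rewrite rmorphXn.
by rewrite zc -exprM mulnC.
Qed.

Lemma I_conv (u c : nat) : ((u + c * r.-1) %% r == 0)%N = (u == c %[mod r]).
Proof.
have r0 : (0 < r)%N by apply: ltnW.
have H : ((u + c * r.-1 + c) %% r = u %% r)%N.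
  by rewrite -addnA -mulnSr prednK // addnC modnMDl.
by rewrite -{1}(mod0n r) -(eqn_modDr c) add0n H.
Qed.

Lemma E_I u c : E (u + c * r.-1) = r%:R * ind (u == c %[mod r]).
Proof. by rewrite E_val I_conv. Qed.

Definition T (s : seq (nat * nat)) (k l : nat) : algC :=
  \sum_(p <- s) z ^+ (p.1 * k) * z ^+ (p.2 * l).

Lemma sumT s : \sum_(k < r) \sum_(l < r) T s k l = \sum_(p <- s) E p.1 * E p.2.
Proof.
rewrite /T (eq_bigr (fun k : 'I_r => \sum_(p <- s) \sum_(l < r) z ^+ (p.1 * k) * z ^+ (p.2 * l))); last first.
  by move=> k _; rewrite exchange_big.
rewrite exchange_big /=; apply: eq_bigr => p _.
rewrite /E mulr_suml; apply: eq_bigr => k _; by rewrite mulr_sumr.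
Qed.

Lemma sumTd s : \sum_(k < r) T s k k = \sum_(p <- s) E (p.1 + p.2).
Proof.
rewrite /T exchange_big /=; apply: eq_bigr => p _.
by rewrite /E; apply: eq_bigr => k _; rewrite -exprD mulnDl.
Qed.

End Zeta.

Section Main.
Variables (F L : finFieldType) (iota : {rmorphism F -> L}) (rho : F) (sigma : L).
Hypothesis hrho : (rr F).-primitive_root rho.
Local Notation q := #|F|.
Local Notation Q := (#|F|%:R : algC).

Definition hcl (f1 f2 f3 : gl2class -> algC) (cl : gl2class) := f1 cl * f2 cl * (f3 cl)^*.
Definition symc (f : gl2class -> algC) := forall k l, f (C3 k l) = f (C3 l k).

Lemma mult_cl f1 f2 f3 (h4 : forall m, f1 (C4 m) = 0) (s1 : symc f1) (s2 : symc f2) (s3 : symc f3) :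
  mult (fun M => f1 (classify iota rho sigma M)) (fun M => f2 (classify iota rho sigma M))
       (fun M => f3 (classify iota rho sigma M)) =
  (2 * (Q * (Q - 1) ^+ 2 * (Q + 1)))^-1 *
  \sum_(k < rr F) \sum_(l < rr F)
     (if k == l then 2 * (hcl f1 f2 f3 (C1 k) + (Q * Q - 1) * hcl f1 f2 f3 (C2 k))
      else (Q * Q + Q) * hcl f1 f2 f3 (C3 k l)).
Proof.
have q0 : (0 < q)%N by apply/card_gt0P; exists 0.
rewrite /mult.
have -> : #|[set: {'GL_2[F]}]| = (q * q.-1 ^ 2 * q.+1)%N by exact: card_GL_2.
have H2 : (2 : algC) != 0 by rewrite pnatr_eq0.
have -> : \sum_(g : {'GL_2[F]}) f1 (classify iota rho sigma (GLval g)) *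
             f2 (classify iota rho sigma (GLval g)) * (f3 (classify iota rho sigma (GLval g)))^* =
          2^-1 * (2 * \sum_(g : {'GL_2[F]}) hcl f1 f2 f3 (classify iota rho sigma (GLval g))).
  by rewrite mulKf.
have h4' : forall m, hcl f1 f2 f3 (C4 m) = 0 by move=> m; rewrite /hcl h4 !mul0r.
have h3' : symc (hcl f1 f2 f3) by move=> k l; rewrite /hcl s1 s2 s3.
rewrite gl_sum // (sum_nz2 hrho).
have nat1 : (q * q - 1)%:R = Q * Q - 1 :> algC.
  by rewrite natrB ?natrM // muln_gt0 q0.
have nat2 : (q * q + q)%:R = Q * Q + Q :> algC by rewrite natrD natrM.
rewrite nat1 nat2.
have -> : ((q * q.-1 ^ 2 * q.+1)%:R : algC) = Q * (Q - 1) ^+ 2 * (Q + 1).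
  by rewrite natrM natrM natrX -(subn1 q) natrB // -(addn1 q) natrD.
rewrite mulrA -invfM (mulrC _ 2); congr (_ * _).
apply: eq_bigr => k _; apply: eq_bigr => l _.
rewrite (eq_prim_root_expr hrho) !modn_small // !(logF_rho hrho).
by [].
Qed.

Hypothesis r1 : (1 < rr F)%N.
Local Notation r := (rr F).
Local Notation z := (zeta (rr F)).

Definition Wcl (a b : nat) (cl : gl2class) : algC := match cl with
  | C1 k => (ss F)%:R * alpha F (a + b) k | C2 k => alpha F (a + b) k
  | C3 k l => alpha F a k * alpha F b l + alpha F a l * alpha F b k | C4 _ => 0 end.
Definition Ucl (a : nat) (cl : gl2class) : algC := match cl with
  | C1 k => alpha F a (2 * k) | C2 k => alpha F a (2 * k)
  | C3 k l => alpha F a (k + l) | C4 m => alpha F a m end.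
Definition Vcl (a : nat) (cl : gl2class) : algC := match cl with
  | C1 k => (qq F)%:R * alpha F a (2 * k) | C2 k => 0
  | C3 k l => alpha F a (k + l) | C4 m => - alpha F a m end.
Definition Xcl (n : nat) (cl : gl2class) : algC := match cl with
  | C1 k => (rr F)%:R * alpha F (n %% rr F) k | C2 k => - alpha F (n %% rr F) k
  | C3 k l => 0 | C4 m => - (phi F n m + phi F n (qq F * m)) end.

Lemma Wcl_sym a b : symc (Wcl a b). Proof. by move=> k l /=; rewrite addrC. Qed.
Lemma Ucl_sym a : symc (Ucl a). Proof. by move=> k l /=; rewrite addnC. Qed.
Lemma Vcl_sym a : symc (Vcl a). Proof. by move=> k l /=; rewrite addnC. Qed.
Lemma Xcl_sym a : symc (Xcl a). Proof. by []. Qed.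

Lemma diag_split (A : nat -> algC) (B : nat -> nat -> algC) :
  \sum_(k < r) \sum_(l < r) (if k == l then A k else B k l) =
  \sum_(k < r) A k + \sum_(k < r) \sum_(l < r) B k l - \sum_(k < r) B k k.
Proof.
have H (k : 'I_r) : \sum_(l < r) (if k == l then A k else B k l) = A k + \sum_(l < r) B k l - B k k.
  rewrite (bigD1 k) //= eqxx [in RHS](bigD1 k) //=.
  rewrite (eq_bigr (fun l : 'I_r => B k l)); first by ring.
  by move=> l; rewrite eq_sym => /negbTE ->.
by rewrite (eq_bigr _ (fun k _ => H k)) sumrB big_split.
Qed.

Lemma alpha_conj x j : (alpha F x j)^* = alpha F (x * r.-1) j.
Proof. by rewrite /alpha z_conj // mulnAC. Qed.
Lemma alpha_2 x k : alpha F x (2 * k) = alpha F (2 * x) k.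
Proof. by rewrite /alpha mulnCA mulnA. Qed.
Lemma alpha_D x k l : alpha F x (k + l) = alpha F x k * alpha F x l.
Proof. by rewrite /alpha mulnDr exprD. Qed.

Lemma cM (x y : algC) : (x * y)^* = x^* * y^*. Proof. exact: rmorphM. Qed.
Lemma cD (x y : algC) : (x + y)^* = x^* + y^*. Proof. exact: rmorphD. Qed.
Lemma cN (x : algC) : (- x)^* = - x^*. Proof. exact: rmorphN. Qed.
Lemma cn n : (n%:R : algC)^* = n%:R. Proof. exact: rmorph_nat. Qed.

Lemma cz : (0 : algC)^* = 0. Proof. exact: rmorph0. Qed.

Lemma ind_and (P R : bool) : ind (P && R) = ind P * ind R.
Proof. by case: P; case: R; rewrite /ind ?mul1r ?mul0r. Qed.

Lemma sum_const_z (c : algC) (e : nat) : \sum_(k < r) c * z ^+ (e * k) = c * E r e.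
Proof. by rewrite /E mulr_sumr. Qed.

Lemma sum2_const_T (c : algC) s : \sum_(k < r) \sum_(l < r) c * T r s k l = c * \sum_(p <- s) E r p.1 * E r p.2.
Proof.
rewrite -(sumT r s) mulr_sumr; apply: eq_bigr => k _; by rewrite mulr_sumr.
Qed.

Lemma QE : (ss F)%:R = Q + 1 :> algC.
Proof. by rewrite /ss -addn1 natrD. Qed.
Lemma RE : (rr F)%:R = Q - 1 :> algC.
Proof.
have q0 : (0 < q)%N by apply/card_gt0P; exists 0.
by rewrite /rr -subn1 natrB.
Qed.

Lemma Q1nz : Q + 1 != 0. Proof. by rewrite -QE pnatr_eq0. Qed.
Lemma Qm1nz : Q - 1 != 0. Proof. by rewrite -RE pnatr_eq0 -lt0n ltnW. Qed.
Lemma Q0nz : Q != 0. Proof. by rewrite pnatr_eq0 -lt0n; apply/card_gt0P; exists 0. Qed.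

Lemma partW (a b c d c' d' : nat) :
  mult (chiW iota rho sigma a b) (chiW iota rho sigma c d) (chiW iota rho sigma c' d') =
       ind (a + b + c + d == c' + d' %[mod rr F])%N
     + ind ((a + c == c' %[mod rr F]) && (b + d == d' %[mod rr F]))%N
     + ind ((a + c == d' %[mod rr F]) && (b + d == c' %[mod rr F]))%N
     + ind ((a + d == c' %[mod rr F]) && (b + c == d' %[mod rr F]))%N
     + ind ((a + d == d' %[mod rr F]) && (b + c == c' %[mod rr F]))%N.
Proof.
rewrite (mult_cl (f1 := Wcl a b) (f2 := Wcl c d) (f3 := Wcl c' d')) //;
  try exact: Wcl_sym.
set H := hcl (Wcl a b) (Wcl c d) (Wcl c' d').
rewrite (diag_split (fun k => 2 * (H (C1 k) + (Q * Q - 1) * H (C2 k))) (fun k l => (Q * Q + Q) * H (C3 k l))).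
cbv beta.
set e0 := (a + b + c + d + (c' + d') * r.-1)%N.
pose s8 := [:: (a + c + c' * r.-1, b + d + d' * r.-1)%N; (a + c + d' * r.-1, b + d + c' * r.-1)%N;
               (a + d + c' * r.-1, b + c + d' * r.-1)%N; (a + d + d' * r.-1, b + c + c' * r.-1)%N;
               (b + c + c' * r.-1, a + d + d' * r.-1)%N; (b + c + d' * r.-1, a + d + c' * r.-1)%N;
               (b + d + c' * r.-1, a + c + d' * r.-1)%N; (b + d + d' * r.-1, a + c + c' * r.-1)%N].
have L1 (k : nat) : 2 * (H (C1 k) + (Q * Q - 1) * H (C2 k))
   = (2 * ((ss F)%:R ^+ 3 + (Q * Q - 1))) * z ^+ (e0 * k).
  rewrite /H /hcl /Wcl /e0 !(cD, cM, cN, cn) !alpha_conj /alpha.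
  rewrite !mulnDl !exprD; ring.
have L3 (k l : nat) : (Q * Q + Q) * H (C3 k l) = (Q * Q + Q) * T r s8 k l.
  rewrite /H /hcl /Wcl /T !big_cons big_nil /= !(cD, cM, cN, cn) !alpha_conj /alpha.
  rewrite !mulnDl !exprD; ring.
have Ld (k : nat) : (Q * Q + Q) * H (C3 k k) = ((Q * Q + Q) * 8) * z ^+ (e0 * k).
  rewrite /H /hcl /Wcl /e0 !(cD, cM, cN, cn) !alpha_conj /alpha.
  rewrite !mulnDl !exprD; ring.
rewrite (eq_bigr _ (fun (k : 'I_r) _ => L1 k)) (eq_bigr _ (fun (k : 'I_r) _ => Ld k)).
have L3s : \sum_(k < r) \sum_(l < r) (Q * Q + Q) * H (C3 k l) =
           \sum_(k < r) \sum_(l < r) (Q * Q + Q) * T r s8 k l.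
  by apply: eq_bigr => k _; apply: eq_bigr => l _; exact: L3.
rewrite L3s.
rewrite !sum_const_z sum2_const_T /s8 !big_cons big_nil /= /e0 !(E_I r1) !ind_and QE RE.
field; by rewrite ?Q1nz ?Qm1nz ?Q0nz.
Qed.

Lemma partU (a b c d a' : nat) :
  mult (chiW iota rho sigma a b) (chiW iota rho sigma c d) (chiU iota rho sigma a') =
       ind ((a + c == a' %[mod rr F]) && (b + d == a' %[mod rr F]))%N
     + ind ((a + d == a' %[mod rr F]) && (b + c == a' %[mod rr F]))%N.
Proof.
rewrite (mult_cl (f1 := Wcl a b) (f2 := Wcl c d) (f3 := Ucl a')) //;
  try exact: Wcl_sym; try exact: Ucl_sym.
set H := hcl (Wcl a b) (Wcl c d) (Ucl a').
rewrite (diag_split (fun k => 2 * (H (C1 k) + (Q * Q - 1) * H (C2 k))) (fun k l => (Q * Q + Q) * H (C3 k l))).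
cbv beta.
set e0 := (a + b + c + d + (2 * a') * r.-1)%N.
pose s4 := [:: (a + c + a' * r.-1, b + d + a' * r.-1)%N; (a + d + a' * r.-1, b + c + a' * r.-1)%N;
               (b + c + a' * r.-1, a + d + a' * r.-1)%N; (b + d + a' * r.-1, a + c + a' * r.-1)%N].
have L1 (k : nat) : 2 * (H (C1 k) + (Q * Q - 1) * H (C2 k))
   = (2 * ((ss F)%:R ^+ 2 + (Q * Q - 1))) * z ^+ (e0 * k).
  rewrite /H /hcl /Wcl /Ucl /e0 !alpha_2 ?(cD, cM, cN, cn, cz) !alpha_conj /alpha.
  rewrite ?mul2n -?addnn !mulnDl !exprD; ring.
have L3 (k l : nat) : (Q * Q + Q) * H (C3 k l) = (Q * Q + Q) * T r s4 k l.
  rewrite /H /hcl /Wcl /Ucl /T !big_cons big_nil /= !alpha_D ?(cD, cM, cN, cn, cz) !alpha_conj /alpha.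
  rewrite !mulnDl !exprD; ring.
have Ld (k : nat) : (Q * Q + Q) * H (C3 k k) = ((Q * Q + Q) * 4) * z ^+ (e0 * k).
  rewrite /H /hcl /Wcl /Ucl /e0 !alpha_D ?(cD, cM, cN, cn, cz) !alpha_conj /alpha.
  rewrite ?mul2n -?addnn !mulnDl !exprD; ring.
rewrite (eq_bigr _ (fun (k : 'I_r) _ => L1 k)) (eq_bigr _ (fun (k : 'I_r) _ => Ld k)).
have L3s : \sum_(k < r) \sum_(l < r) (Q * Q + Q) * H (C3 k l) =
           \sum_(k < r) \sum_(l < r) (Q * Q + Q) * T r s4 k l.
  by apply: eq_bigr => k _; apply: eq_bigr => l _; exact: L3.
rewrite L3s.
rewrite !sum_const_z sum2_const_T /s4 !big_cons big_nil /= /e0 !(E_I r1) !ind_and QE RE.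
field; by rewrite ?Q1nz ?Qm1nz ?Q0nz.
Qed.

Lemma partV (a b c d b' : nat) :
  mult (chiW iota rho sigma a b) (chiW iota rho sigma c d) (chiV iota rho sigma b') =
       ind (a + b + c + d == 2 * b' %[mod rr F])%N
     + ind ((a + c == b' %[mod rr F]) && (b + d == b' %[mod rr F]))%N
     + ind ((a + d == b' %[mod rr F]) && (b + c == b' %[mod rr F]))%N.
Proof.
rewrite (mult_cl (f1 := Wcl a b) (f2 := Wcl c d) (f3 := Vcl b')) //;
  try exact: Wcl_sym; try exact: Vcl_sym.
set H := hcl (Wcl a b) (Wcl c d) (Vcl b').
rewrite (diag_split (fun k => 2 * (H (C1 k) + (Q * Q - 1) * H (C2 k))) (fun k l => (Q * Q + Q) * H (C3 k l))).
cbv beta.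
set e0 := (a + b + c + d + (2 * b') * r.-1)%N.
pose s4 := [:: (a + c + b' * r.-1, b + d + b' * r.-1)%N; (a + d + b' * r.-1, b + c + b' * r.-1)%N;
               (b + c + b' * r.-1, a + d + b' * r.-1)%N; (b + d + b' * r.-1, a + c + b' * r.-1)%N].
have L1 (k : nat) : 2 * (H (C1 k) + (Q * Q - 1) * H (C2 k))
   = (2 * ((ss F)%:R ^+ 2 * Q)) * z ^+ (e0 * k).
  rewrite /H /hcl /Wcl /Vcl /e0 /qq !alpha_2 ?(cD, cM, cN, cn, cz) !alpha_conj /alpha.
  rewrite ?mul2n -?addnn !mulnDl !exprD; ring.
have L3 (k l : nat) : (Q * Q + Q) * H (C3 k l) = (Q * Q + Q) * T r s4 k l.
  rewrite /H /hcl /Wcl /Vcl /T !big_cons big_nil /= !alpha_D ?(cD, cM, cN, cn, cz) !alpha_conj /alpha.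
  rewrite !mulnDl !exprD; ring.
have Ld (k : nat) : (Q * Q + Q) * H (C3 k k) = ((Q * Q + Q) * 4) * z ^+ (e0 * k).
  rewrite /H /hcl /Wcl /Vcl /e0 !alpha_D ?(cD, cM, cN, cn, cz) !alpha_conj /alpha.
  rewrite ?mul2n -?addnn !mulnDl !exprD; ring.
rewrite (eq_bigr _ (fun (k : 'I_r) _ => L1 k)) (eq_bigr _ (fun (k : 'I_r) _ => Ld k)).
have L3s : \sum_(k < r) \sum_(l < r) (Q * Q + Q) * H (C3 k l) =
           \sum_(k < r) \sum_(l < r) (Q * Q + Q) * T r s4 k l.
  by apply: eq_bigr => k _; apply: eq_bigr => l _; exact: L3.
rewrite L3s.
rewrite !sum_const_z sum2_const_T /s4 !big_cons big_nil /= /e0 !(E_I r1) !ind_and QE RE.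
field; by rewrite ?Q1nz ?Qm1nz ?Q0nz.
Qed.

Lemma partX (a b c d n : nat) :
  mult (chiW iota rho sigma a b) (chiW iota rho sigma c d) (chiX iota rho sigma n) =
       ind (a + b + c + d == n %[mod rr F])%N.
Proof.
rewrite (mult_cl (f1 := Wcl a b) (f2 := Wcl c d) (f3 := Xcl n)) //;
  try exact: Wcl_sym; try exact: Xcl_sym.
set H := hcl (Wcl a b) (Wcl c d) (Xcl n).
rewrite (diag_split (fun k => 2 * (H (C1 k) + (Q * Q - 1) * H (C2 k))) (fun k l => (Q * Q + Q) * H (C3 k l))).
cbv beta.
set e0 := (a + b + c + d + (n %% r) * r.-1)%N.
have L1 (k : nat) : 2 * (H (C1 k) + (Q * Q - 1) * H (C2 k))
   = (2 * ((ss F)%:R ^+ 2 * (rr F)%:R - (Q * Q - 1))) * z ^+ (e0 * k).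
  rewrite /H /hcl /Wcl /Xcl /e0 ?(cD, cM, cN, cn, cz) !alpha_conj /alpha.
  rewrite !mulnDl !exprD; ring.
have L3 (k l : nat) : (Q * Q + Q) * H (C3 k l) = 0.
  by rewrite /H /hcl /Xcl cz !mulr0.
rewrite (eq_bigr _ (fun (k : 'I_r) _ => L1 k)) (eq_bigr _ (fun (k : 'I_r) _ => L3 k k)).
have L3s : \sum_(k < r) \sum_(l < r) (Q * Q + Q) * H (C3 k l) = 0.
  by rewrite big1 // => k _; rewrite big1 // => l _; exact: L3.
rewrite L3s big1_eq subr0 addr0.
rewrite !sum_const_z /e0 !(E_I r1) modn_mod QE RE.
field; by rewrite ?Q1nz ?Qm1nz ?Q0nz.
Qed.
End Main.


Unset Implicit Arguments.

Theorem lemmaA3 (F L : finFieldType) (iota : {rmorphism F -> L})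
    (rho : F) (sigma : L)
    (hL : #|L| = (#|F| ^ 2)%N)
    (hrho : (rr F).-primitive_root rho)
    (hsigma : (rr F * ss F)%N.-primitive_root sigma)
    (hsr : sigma ^+ ss F = iota rho)
    (a b c d : 'I_(rr F)) (hab : a != b) (hcd : c != d) :
  let W1 := chiW iota rho sigma a b in
  let W2 := chiW iota rho sigma c d in
  (forall a' : 'I_(rr F),
     mult W1 W2 (chiU iota rho sigma a') =
       ind ((a + c == a' %[mod rr F]) && (b + d == a' %[mod rr F]))%N
     + ind ((a + d == a' %[mod rr F]) && (b + c == a' %[mod rr F]))%N)
  /\ (forall b' : 'I_(rr F),
     mult W1 W2 (chiV iota rho sigma b') =
       ind (a + b + c + d == 2 * b' %[mod rr F])%N
     + ind ((a + c == b' %[mod rr F]) && (b + d == b' %[mod rr F]))%N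
     + ind ((a + d == b' %[mod rr F]) && (b + c == b' %[mod rr F]))%N)
  /\ (forall c' d' : 'I_(rr F), c' != d' ->
     mult W1 W2 (chiW iota rho sigma c' d') =
       ind (a + b + c + d == c' + d' %[mod rr F])%N
     + ind ((a + c == c' %[mod rr F]) && (b + d == d' %[mod rr F]))%N
     + ind ((a + c == d' %[mod rr F]) && (b + d == c' %[mod rr F]))%N
     + ind ((a + d == c' %[mod rr F]) && (b + c == d' %[mod rr F]))%N
     + ind ((a + d == d' %[mod rr F]) && (b + c == c' %[mod rr F]))%N)
  /\ (forall n' : 'I_(rr F * ss F), (n' %% ss F != 0)%N ->
     mult W1 W2 (chiX iota rho sigma n') =
       ind (a + b + c + d == n' %[mod rr F])%N).
Proof.
move=> W1 W2.
have r1 : (1 < rr F)%N.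
  rewrite ltnNge; apply/negP => h; move: hab; apply/negP; rewrite negbK.
  apply/eqP/val_inj; have := ltn_ord a; have := ltn_ord b; rewrite /=; lia.
split; first by move=> a'; apply: partU.
split; first by move=> b'; apply: partV.
split; first by move=> c' d' _; apply: partW.
by move=> n' _; apply: partX.
Qed.
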